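(* Let $S$ be a string of length $n$ over a general ordered alphabet, and let $\mathrm{nss}$ be its next-smaller-suffix array. Then all decreasing runs of $S$ can be computed in $O(n)+t(n)$ time and $O(n)+s(n)$ space, where $t(n)$ and $s(n)$ are the time and space needed to compute $\mathrm{llce}(i,\mathrm{nss}[i])$ and $\mathrm{rlce}(i,\mathrm{nss}[i])$ for all $i\in[1,n]$ with $\mathrm{nss}[i]\ne n+1$.
   Context: Model: word RAM with word size $w\ge\lceil\log_2 n\rceil$. A general ordered alphabet is a totally ordered alphabet on which the order of two symbols can be tested in constant time. For $i\in[1,n+1]$, $S_i=S[i..n]$ ($S_{n+1}$ empty); $\prec$ is the induced lexicographical order. $\mathrm{nss}[i]=\min\{j \mid j=n+1 \text{ or } (j\in(i,n] \text{ and } S_i\succ S_j)\}$. $\mathrm{rlce}(i,j)$ is the length of the longest common prefix of $S_i$ and $S_j$; $\mathrm{llce}(i,j)$ is the length of the longest common suffix of $S[1..i]$ and $S[1..j]$. A positive integer $p$ is a period of $S[i..j]$ if $S[x]=S[x+p]$ for all $x\in[i,j-p]$. A run is a triple $(i,j,p)$ such that $p$ is the smallest period of $S[i..j]$, $j-i+1\ge 2p$, and neither $(i-1,j,p)$ (when $i>1$) nor $(i,j+1,p)$ (when $j<n$) satisfies these properties; it is decreasing if $S_i\succ S_{i+p}$. *)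

(* Defs.v *)
From mathcomp Require Import all_boot all_order.
Set Implicit Arguments. Unset Strict Implicit. Unset Printing Implicit Defensive.
Import Order.TTheory.
Local Open Scope order_scope.

(* Strings over a general ordered alphabet (T : orderType), 1-indexed. *)
Section Strings.
Context {disp : Order.disp_t} {T : orderType disp}.
Implicit Types (S : seq T).

Definition sym S (x : nat) : option T := if (0 < x)%N then onth S x.-1 else None.

Definition suf S (i : nat) : seq T := drop i.-1 S.

Fixpoint lex_lt (s t : seq T) : bool :=
  match s, t with
  | [::], [::] => false
  | [::], _ :: _ => true
  | _ :: _, [::] => false
  | a :: s', b :: t' => (a < b) || ((a == b) && lex_lt s' t')
  end.

(* nss[i] = min{ j | j = n+1 or (j in (i,n] and S_i > S_j) } *)
Definition nss S (i : nat) : nat :=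
  i.+1 + find (fun j => lex_lt (suf S j) (suf S i)) (iota i.+1 (size S - i)).

Fixpoint lcp (s t : seq T) : nat :=
  match s, t with
  | a :: s', b :: t' => if a == b then (lcp s' t').+1 else 0
  | _, _ => 0
  end.

Definition rlce S (i j : nat) : nat := lcp (suf S i) (suf S j).
Definition llce S (i j : nat) : nat := lcp (rev (take i S)) (rev (take j S)).

Definition is_period S (i j p : nat) : bool :=
  (0 < p)%N && all (fun x => sym S x == sym S (x + p)) (index_iota i (j - p).+1).

Definition run_cond S (i j p : nat) : bool :=
  [&& (1 <= i)%N, (i <= j)%N, (j <= size S)%N, is_period S i j p,
      all (fun q => ~~ is_period S i j q) (iota 1 p.-1) &
      (2 * p <= j - i + 1)%N].

Definition is_run S (i j p : nat) : bool :=
  [&& run_cond S i j p,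
      ~~ ((1 < i)%N && run_cond S i.-1 j p) &
      ~~ ((j < size S)%N && run_cond S i j.+1 p)].

Definition is_decreasing_run S (i j p : nat) : bool :=
  is_run S i j p && lex_lt (suf S (i + p)) (suf S i).

Definition sym_lt S (a b : nat) : bool :=
  match sym S a, sym S b with Some x, Some y => x < y | _, _ => false end.

End Strings.

(* A word RAM with word size w; symbols are only accessible through a *)
(* constant-time comparison instruction (general ordered alphabet).   *)
Inductive instr : Type :=
  | IConst of nat & nat
  | IAdd of nat & nat & nat
  | ISub of nat & nat & nat      (* r := a - b (truncated) *)
  | IMul of nat & nat & nat
  | IDiv of nat & nat & nat      (* r := a / b  (0 if b = 0) *)
  | ILt of nat & nat & nat
  | IEq of nat & nat & nat
  | ILoad of nat & nat
  | IStore of nat & nat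
  | ICmpSym of nat & nat & nat
  | IJz of nat & nat
  | IJmp of nat
  | IOut of nat
  | IHalt.

Record config := Config {
  pc : nat;
  regs : nat -> nat;
  mem : nat -> nat;
  out : seq nat;
  maxaddr : nat  (* largest memory address accessed so far *)
}.

Definition upd (f : nat -> nat) (a v : nat) : nat -> nat :=
  fun x => if x == a then v else f x.

Definition step (P : seq instr) (slt : nat -> nat -> bool) (w : nat)
    (c : config) : option config :=
  let R := regs c in
  let W v := v %% 2 ^ w in
  let setr r v := Some (Config (pc c).+1 (upd R r v) (mem c) (out c) (maxaddr c)) in
  match nth IHalt P (pc c) with
  | IConst r k => setr r (W k)
  | IAdd r a b => setr r (W (R a + R b))
  | ISub r a b => setr r (R a - R b)
  | IMul r a b => setr r (W (R a * R b))
  | IDiv r a b => setr r (R a %/ R b)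
  | ILt r a b => setr r (nat_of_bool (R a < R b)%N)
  | IEq r a b => setr r (nat_of_bool (R a == R b))
  | ILoad r a => Some (Config (pc c).+1 (upd R r (mem c (R a))) (mem c) (out c)
                              (maxn (maxaddr c) (R a)))
  | IStore a b => Some (Config (pc c).+1 R (upd (mem c) (R a) (R b)) (out c)
                               (maxn (maxaddr c) (R a)))
  | ICmpSym r a b => setr r (nat_of_bool (slt (R a) (R b)))
  | IJz r l => Some (Config (if R r == 0 then l else (pc c).+1) R (mem c) (out c) (maxaddr c))
  | IJmp l => Some (Config l R (mem c) (out c) (maxaddr c))
  | IOut r => Some (Config (pc c).+1 R (mem c) (rcons (out c) (R r)) (maxaddr c))
  | IHalt => None
  end.

Definition halted (P : seq instr) (slt : nat -> nat -> bool) (w : nat) (c : config) : bool :=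
  if step P slt w c is None then true else false.

Fixpoint exec (P : seq instr) (slt : nat -> nat -> bool) (w : nat) (t : nat)
    (c : config) : config :=
  match t with
  | 0 => c
  | t'.+1 => match step P slt w c with Some c' => exec P slt w t' c' | None => c end
  end.

Definition input_mem {disp : Order.disp_t} {T : orderType disp} (S : seq T) : nat -> nat :=
  let n := size S in
  fun a =>
    if a == 0 then n
    else if (a <= n)%N then nss S a
    else if (a <= 2 * n)%N then
      (if nss S (a - n) != n.+1 then llce S (a - n) (nss S (a - n)) else 0)
    else if (a <= 3 * n)%N then
      (if nss S (a - 2 * n) != n.+1 then rlce S (a - 2 * n) (nss S (a - 2 * n)) else 0)
    else 0.

Definition init_config {disp : Order.disp_t} {T : orderType disp} (S : seq T) : config :=
  Config 0 (fun _ => 0) (input_mem S) [::] 0.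

Definition outputs_decreasing_runs {disp : Order.disp_t} {T : orderType disp}
    (S : seq T) (o : seq nat) : Prop :=
  exists L : seq (nat * nat * nat),
    [/\ o = flatten [seq [:: r.1.1; r.1.2; r.2] | r <- L], uniq L &
        forall i j p, ((i, j, p) \in L) = is_decreasing_run S i j p].

(* Main.v *)
Require Import Defs.
From mathcomp Require Import all_boot all_order.
From mathcomp Require Import zify.
Set Implicit Arguments. Unset Strict Implicit. Unset Printing Implicit Defensive.
Import Order.TTheory.

Ltac is_arith P := idtac; lazymatch P with
 | is_true (leq _ _) => idtac
 | is_true (leq _ _ && leq _ _) => idtac
 | @eq nat _ _ => idtac
 | ~ (@eq nat _ _) => idtac
 | _ => fail end.
Ltac alia := repeat match goal with H : ?P |- _ =>
   (lazymatch type of P with Prop => idtac end); assert_fails (is_arith P); clear H end; lia.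

Section Lex.
Context {disp : Order.disp_t} {T : orderType disp}.
Implicit Types (s u v : seq T).
Variable x0 : T.

Lemma lex_irr s : ~~ lex_lt s s.
Proof. elim: s => //= a s IH; by rewrite ltxx eqxx /= IH. Qed.

Lemma lex_trans s u v : lex_lt s u -> lex_lt u v -> lex_lt s v.
Proof.
elim: s u v => [|a s IH] [|b u] [|c v] //=.
case/orP=> [ab|/andP[/eqP-> su]]; case/orP=> [bc|/andP[/eqP<- uv]].
- by rewrite (lt_trans ab bc).
- by rewrite ab.
- by rewrite bc.
- by rewrite eqxx (IH _ _ su uv) orbT.
Qed.

Lemma lex_asym s u : lex_lt s u -> ~~ lex_lt u s.
Proof. move=> su; apply/negP=> us; by move: (lex_trans su us); rewrite (negbTE (lex_irr s)). Qed.

Lemma lex_total s u : s != u -> lex_lt s u || lex_lt u s.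
Proof.
elim: s u => [|a s IH] [|b u] //=.
rewrite eqseq_cons negb_and => H.
case: (ltgtP a b) => //= ab; subst b.
by move: H; rewrite eqxx /= => H; apply: IH.
Qed.

Lemma lex_prefix s u m : (forall t, t < m -> nth x0 s t = nth x0 u t) ->
  m = size s -> m < size u -> lex_lt s u.
Proof.
elim: m s u => [|m IH] [|a s] [|b u] //= H.
move=> [Hs] Hu; have := H 0 isT; rewrite /= => ->; rewrite eqxx ltxx /=.
apply: (IH s u) => // t tm; exact: (H t.+1).
Qed.

Lemma lex_mis s u m : (forall t, t < m -> nth x0 s t = nth x0 u t) ->
  m < size s -> m < size u -> (nth x0 s m < nth x0 u m)%O -> lex_lt s u.
Proof.
elim: m s u => [|m IH] [|a s] [|b u] //= H; first by move=> _ _ ->.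
move=> Hs Hu Hm; have := H 0 isT; rewrite /= => ->; rewrite eqxx ltxx /=.
apply: (IH s u) => // t tm; exact: (H t.+1).
Qed.

Lemma lex_mis_eq s u m : (forall t, t < m -> nth x0 s t = nth x0 u t) ->
  m < size s -> m < size u -> nth x0 s m != nth x0 u m ->
  lex_lt s u = ((nth x0 s m < nth x0 u m)%O).
Proof.
move=> H Hs Hu Hne; case: ltgtP Hne => // Hlt _.
- exact: lex_mis Hlt.
- apply/negbTE/lex_asym; apply: (lex_mis (m:=m)) => // t tm; by rewrite H.
Qed.

Lemma lex_eqsize s u : lex_lt s u -> size s = size u ->
  exists2 m, m < size s & (forall t, t < m -> nth x0 s t = nth x0 u t) /\ (nth x0 s m < nth x0 u m)%O.
Proof.
elim: s u => [|a s IH] [|b u] //=.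
case/orP=> [ab _|/andP[/eqP-> su] [Hsz]]; first by exists 0.
case: (IH u su Hsz) => m Hm [H1 H2]; exists m.+1 => //; split => //.
by case.
Qed.

Lemma lcp_le s u : (lcp s u <= size s)%N /\ (lcp s u <= size u)%N.
Proof. elim: s u => [|a s IH] [|b u] //=; case: eqP => //= _; case: (IH u) => ? ?; split; exact: leq_trans (leqnSn _) _ || done. Qed.

Lemma lcp_agree s u t : t < lcp s u -> nth x0 s t = nth x0 u t.
Proof.
elim: s u t => [|a s IH] [|b u] [|t] //=; case: eqP => // ab; try by rewrite ab. move=> h; exact: IH.
Qed.

Lemma lcp_stop s u : lcp s u = size s \/ lcp s u = size u \/
   nth x0 s (lcp s u) != nth x0 u (lcp s u).
Proof.
elim: s u => [|a s IH] [|b u] /=; try by [left|right;left].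
case: eqP => [_|/eqP ne]; last by right; right.
case: (IH u) => [->|[->|]]; by [left|right;left|right;right].
Qed.

Lemma lcp_eq s u m : (forall t, t < m -> nth x0 s t = nth x0 u t) ->
  (m <= size s)%N -> (m <= size u)%N ->
  (m = size s \/ m = size u \/ nth x0 s m != nth x0 u m) -> lcp s u = m.
Proof.
elim: m s u => [|m IH] s u H Hs Hu Hc.
  case: s u Hs Hu Hc {H} => [|a s] [|b u] //= _ _ [|[|]] //= ne.
  by rewrite (negbTE ne).
case: s u Hs Hu Hc H => [|a s] [|b u] //= Hs Hu Hc H.
have := H 0 isT; rewrite /= => ->; rewrite eqxx; congr S.
apply: IH => // [t tm|]; first exact: (H t.+1).
by case: Hc => [[->]|[[->]|]]; [left|right;left|right;right].
Qed.

End Lex.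

Section Str.
Context {disp : Order.disp_t} {T : orderType disp}.
Variable x0 : T.
Variable S : seq T.
Local Notation n := (size S).
Definition at_ x := nth x0 S x.-1.

Lemma sym_at x : 1 <= x <= n -> sym S x = Some (at_ x).
Proof.
case/andP=> x1 xn; rewrite /sym x1 onthE (nth_map x0) //; last by rewrite prednK.
Qed.

Lemma is_periodP i j p : 1 <= i -> j <= n ->
  reflect (0 < p /\ forall x, i <= x -> x + p <= j -> at_ x = at_ (x + p))
          (is_period S i j p).
Proof.
move=> i1 jn; rewrite /is_period; apply: (iffP andP) => [[p0 /allP H]|[p0 H]]; split => //.
- move=> x ix xj; have: x \in index_iota i (j - p).+1 by rewrite mem_index_iota; alia.
  move/H/eqP.
  have h1 : 1 <= x <= n by alia.
  have h2 : 1 <= x + p <= n by alia.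
  by rewrite (sym_at h1) (sym_at h2); case.
- apply/allP => x; rewrite mem_index_iota => /andP[ix xj].
  have h1 : 1 <= x <= n by alia.
  have h2 : 1 <= x + p <= n by alia.
  by rewrite (sym_at h1) (sym_at h2) H //; alia.
Qed.

Lemma nth_suf i t : 1 <= i -> nth x0 (suf S i) t = at_ (i + t).
Proof. move=> i1; rewrite /suf nth_drop /at_; congr nth; alia. Qed.

Lemma size_suf i : 1 <= i -> size (suf S i) = n.+1 - i.
Proof. move=> i1; rewrite /suf size_drop; alia. Qed.

Lemma nth_rtake k t : t < k -> k <= n -> nth x0 (rev (take k S)) t = at_ (k - t).
Proof.
move=> tk kn; have sz : size (take k S) = k by rewrite size_take; case: ltnP; alia.
rewrite nth_rev sz; last by alia.
rewrite nth_take /at_; [congr nth|]; alia.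
Qed.

Lemma size_rtake k : k <= n -> size (rev (take k S)) = k.
Proof. move=> kn; rewrite size_rev size_take; case: ltnP; alia. Qed.

Lemma suf_neq x y : 1 <= x -> x < y -> y <= n.+1 -> suf S x != suf S y.
Proof.
move=> x1 xy yn; apply/negP=> /eqP E; have := congr1 size E.
rewrite !size_suf; alia.
Qed.

Lemma nss_spec k : 1 <= k <= n ->
  [/\ k < nss S k, nss S k <= n.+1,
      (nss S k <= n -> lex_lt (suf S (nss S k)) (suf S k)) &
      (forall j, k < j < nss S k -> ~~ lex_lt (suf S j) (suf S k))].
Proof.
case/andP=> k1 kn; rewrite /nss.
set P := (fun j => _); set s := iota _ _.
have Hsz : size s = n - k by rewrite size_iota.
have Hf := find_size P s.
split.
- alia.
- alia.
- move=> Hle; have hs : has P s by rewrite has_find; alia.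
  have := nth_find 0 hs; rewrite nth_iota; last by alia.
  by rewrite /P.
- move=> j /andP[kj jq].
  have hj : j - k.+1 < find P s by alia.
  have := before_find 0 hj.
  rewrite nth_iota; last by alia.
  by rewrite /P subnKC // => ->.
Qed.

Lemma nss_eq k q : 1 <= k -> k < q -> q <= n -> lex_lt (suf S q) (suf S k) ->
  (forall j, k < j < q -> ~~ lex_lt (suf S j) (suf S k)) -> nss S k = q.
Proof.
move=> k1 kq qn Hq Hmin.
have [H1 H2 H3 H4] := nss_spec (k:=k) (ltac:(alia)).
case: (ltngtP (nss S k) q) => // H.
- by move: (H3 ltac:(alia)) (Hmin (nss S k) ltac:(alia)) => ->.
- by move: (H4 q ltac:(alia)); rewrite Hq.
Qed.


Definition per s e d := forall z, s <= z -> z + d <= e -> at_ z = at_ (z + d).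

Lemma per_sub s e d s' e' : s <= s' -> e' <= e -> per s e d -> per s' e' d.
Proof. move=> h1 h2 H z h3 h4; apply: H; alia. Qed.

Lemma lemG x d e : 1 <= x -> 0 < d -> x + d <= e.+1 -> e <= n -> per x e d ->
  (e = n \/ (e < n /\ (at_ e.+1 < at_ (e.+1 - d))%O)) ->
  lex_lt (suf S (x + d)) (suf S x).
Proof.
move=> x1 d0 xde en Hp Hend.
have agr : forall t, t < e.+1 - (x + d) -> nth x0 (suf S (x + d)) t = nth x0 (suf S x) t.
  move=> t tm; rewrite !nth_suf; [|alia|alia].
  rewrite (Hp (x + t)); [congr at_|..]; alia.
case: Hend => [En|[En Hlt]].
- apply: (lex_prefix agr); rewrite !size_suf; alia.
- apply: (lex_mis agr); try (rewrite !size_suf; alia).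
  rewrite !nth_suf; [|alia|alia].
  have -> : x + d + (e.+1 - (x + d)) = e.+1 by alia.
  by have -> : x + (e.+1 - (x + d)) = e.+1 - d by alia.
Qed.

Lemma llce_spec k q : 1 <= k -> k < q -> q <= n ->
  [/\ llce S k q <= k, (forall t, t < llce S k q -> at_ (k - t) = at_ (q - t)) &
      (llce S k q = k \/ at_ (k - llce S k q) != at_ (q - llce S k q))].
Proof.
move=> k1 kq qn; rewrite /llce.
have [h1 h2] := lcp_le (rev (take k S)) (rev (take q S)).
have sk : size (rev (take k S)) = k by rewrite size_rtake; alia.
have sq : size (rev (take q S)) = q by rewrite size_rtake; alia.
rewrite sk sq in h1 h2.
split => //.
- move=> t tl; have := lcp_agree x0 tl; rewrite !nth_rtake //; alia.
- case: (lcp_stop x0 (rev (take k S)) (rev (take q S))); rewrite ?sk ?sq.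
  + by left.
  + case=> [E|]; first alia.
    case: (ltnP (lcp (rev (take k S)) (rev (take q S))) k) => hl; last by left; alia.
    by rewrite !nth_rtake //; try alia; right.
Qed.

Lemma rlce_spec k q : 1 <= k -> k < q -> q <= n ->
  [/\ rlce S k q <= n.+1 - q, (forall t, t < rlce S k q -> at_ (k + t) = at_ (q + t)) &
      (rlce S k q = n.+1 - q \/ (rlce S k q < n.+1 - q /\ at_ (k + rlce S k q) != at_ (q + rlce S k q)))].
Proof.
move=> k1 kq qn; rewrite /rlce.
have [h1 h2] := lcp_le (suf S k) (suf S q).
have sk : size (suf S k) = n.+1 - k by rewrite size_suf; alia.
have sq : size (suf S q) = n.+1 - q by rewrite size_suf; alia.
rewrite sk sq in h1 h2.
split => //.
- move=> t tl; have := lcp_agree x0 tl; rewrite !nth_suf //; alia.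
- case: (lcp_stop x0 (suf S k) (suf S q)); rewrite ?sk ?sq.
  + move=> E; alia.
  + case=> [E|]; first by left.
    case: (ltnP (lcp (suf S k) (suf S q)) (n.+1 - q)) => hl; last by left; alia.
    by rewrite !nth_suf //; try alia; right.
Qed.

Lemma weakFW s e p q : 0 < q -> q < p -> p + q <= e.+1 - s -> per s e p -> per s e q -> per s e (p - q).
Proof.
move=> q0 qp len Hp Hq z sz ze.
case: (leqP (z + p) e) => h.
- rewrite (Hp z) //; rewrite (Hq (z + (p - q))); [congr at_|..]; alia.
- have e1 : at_ z = at_ (z - q) by rewrite (Hq (z - q)); [congr at_|..]; alia.
  rewrite e1 (Hp (z - q)); [congr at_|..]; alia.
Qed.

Lemma per_of_period s e d : 1 <= s -> e <= n -> is_period S s e d -> per s e d.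
Proof. by move=> s1 en /(is_periodP _ s1 en) [_ H]. Qed.

Lemma sound k : 1 <= k <= n -> nss S k <= n ->
  let q := nss S k in let p := q - k in
  let L := llce S k q in let R := rlce S k q in
  L <= p -> p < L + R -> is_decreasing_run S (k.+1 - L) (q + R - 1) p.
Proof.
move=> /andP[k1 kn] qn q p L R Lp pLR.
have [kq _ Hlt Hmin] := nss_spec (k:=k) (ltac:(alia)).
have {}Hlt := Hlt qn.
have [Lk Lagr Lstop] := llce_spec k1 kq qn.
have [Rb Ragr Rstop] := rlce_spec k1 kq qn.
rewrite -/q -/L in Lk Lagr Lstop. rewrite -/q -/R in Rb Ragr Rstop.
have L1 : 1 <= L.
  case: (posnP L) => // L0; exfalso.
  case: Lstop => [|ne]; first alia.
  have R0 : R = 0.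
    case: (posnP R) => // R0; have := Ragr 0 R0; rewrite !addn0.
    by move: ne; rewrite L0 !subn0 => /eqP.
  alia.
set s := k.+1 - L. set e := q + R - 1.
have s1 : 1 <= s by alia.
have en : e <= n by alia.
have Hper : per s e p.
  move=> z sz ze; case: (leqP z k) => hz.
  - have := Lagr (k - z) ltac:(alia). have -> : k - (k - z) = z by alia.
    have -> : q - (k - z) = z + p by alia. done.
  - have := Ragr (z - k) ltac:(alia). have -> : k + (z - k) = z by alia.
    have -> : q + (z - k) = z + p by alia. done.
have p0 : 0 < p by alia.
have Hend : e = n \/ (e < n /\ (at_ e.+1 < at_ (e.+1 - p))%O).
  case: Rstop => [RE|[RE ne]]; first by left; alia.
  right; split; first alia.
  have agr : forall t, t < R -> nth x0 (suf S q) t = nth x0 (suf S k) t.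
    move=> t tR; rewrite !nth_suf; [|alia|alia]; by rewrite Ragr.
  have ne' : nth x0 (suf S q) R != nth x0 (suf S k) R.
    by rewrite !nth_suf; [rewrite eq_sym|alia|alia].
  have sq : R < size (suf S q) by rewrite size_suf; alia.
  have sk : R < size (suf S k) by rewrite size_suf; alia.
  have := lex_mis_eq agr sq sk ne'.
  rewrite Hlt !nth_suf; [|alia|alia].
  have -> : q + R = e.+1 by alia. have -> : k + R = e.+1 - p by alia.
  by move <-.
have len : 2 * p <= e - s + 1 by alia.
rewrite /is_decreasing_run /is_run.
have Hrc : run_cond S s e p.
  rewrite /run_cond s1 en /=.
  apply/and4P; split; first alia.
  - apply/(is_periodP _ s1 en); split => //.
  - apply/allP => q'; rewrite mem_iota => /andP[q1 q2].
    apply/negP => /(per_of_period s1 en) Hq'.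
    have Hpq := weakFW (ltac:(alia) : 0 < q') (ltac:(alia) : q' < p) (ltac:(alia) : p + q' <= e.+1 - s) Hper Hq'.
    have : lex_lt (suf S (k + q')) (suf S k).
      apply: (lemG (e := e)) => //; try alia.
      + apply: (per_sub _ _ Hq'); alia.
      + case: Hend => [|[E Hlt']]; first by left.
        right; split => //.
        have -> : at_ (e.+1 - q') = at_ (e.+1 - p).
          rewrite (Hpq (e.+1 - p)); [congr at_|..]; alia.
        done.
    by rewrite (negbTE (Hmin (k + q') ltac:(alia))).
  - done.
rewrite Hrc /=.
apply/andP; split; first (apply/andP; split).
- apply/negP => /andP[s2 /and5P[_ _ _ Hp' _]].
  move: Hp' => /(is_periodP _ (ltac:(alia) : 1 <= s.-1) en) [_ H].
  case: Lstop => [|ne]; first alia.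
  have := H s.-1 ltac:(alia) ltac:(alia).
  have -> : s.-1 = k - L by alia. have -> : k - L + p = q - L by alia.
  by move/eqP; rewrite (negbTE ne).
- apply/negP => /andP[e2 /and5P[_ _ _ Hp' _]].
  move: Hp' => /(is_periodP _ s1 (ltac:(alia) : e.+1 <= n)) [_ H].
  case: Rstop => [|[_ ne]]; first alia.
  have := H (k + R) ltac:(alia) ltac:(alia).
  have -> : k + R + p = q + R by alia.
  by move/eqP; rewrite (negbTE ne).
- apply: (lemG (e := e)) => //; alia.
Qed.

Lemma nss_uniq k1 k2 p : 1 <= k1 -> k1 < k2 -> k2 < k1 + p -> k1 + p <= n ->
  nss S k1 = k1 + p -> nss S k2 = k2 + p -> False.
Proof.
move=> k1p h12 h2 hn E1 E2.
have [_ _ H1 M1] := nss_spec (k:=k1) (ltac:(alia)).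
have [_ _ _ M2] := nss_spec (k:=k2) (ltac:(alia)).
rewrite E1 in H1 M1; rewrite E2 in M2.
have l1 := H1 hn.
have nl2 := M1 k2 ltac:(alia).
have nl3 := M2 (k1 + p) ltac:(alia).
have t1 : lex_lt (suf S k1) (suf S k2).
  have := lex_total (suf_neq (ltac:(alia) : 1 <= k1) h12 (ltac:(alia))).
  by rewrite (negbTE nl2) orbF.
have t2 : lex_lt (suf S k2) (suf S (k1 + p)).
  have := lex_total (suf_neq (ltac:(alia) : 1 <= k2) h2 (ltac:(alia))).
  by rewrite (negbTE nl3) orbF.
by have := lex_trans (lex_trans t1 t2) l1; rewrite (negbTE (lex_irr _)).
Qed.

Lemma min_exists (F : nat -> seq T) N : 0 < N ->
  exists2 r0, r0 < N & forall r, r < N -> ~~ lex_lt (F r) (F r0).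
Proof.
elim: N => // N IH _.
case: (posnP N) => [->|N0].
  by exists 0 => // r; rewrite ltnS leqn0 => /eqP ->; exact: lex_irr.
case: (IH N0) => r0 r0N Hr0.
case: (boolP (lex_lt (F N) (F r0))) => HN.
- exists N => // r; rewrite ltnS leq_eqVlt => /orP[/eqP->|rN]; first exact: lex_irr.
  apply/negP => Hr; by move: (Hr0 r rN); rewrite (lex_trans Hr HN).
- exists r0; first alia.
  move=> r; rewrite ltnS leq_eqVlt => /orP[/eqP->//|rN]; exact: Hr0.
Qed.

Lemma complete i j p : is_decreasing_run S i j p ->
  exists k, [/\ i <= k < i + p, 1 <= k <= n, k + p <= n, nss S k = k + p &
     llce S k (k + p) = k.+1 - i /\ rlce S k (k + p) = j.+1 - (k + p)].
Proof.
case/andP=> /and3P[rc nl nr] lx.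
move: (rc) => /and5P[i1 ij jn Hpd /andP[Hall len]].
have [p0 Hper] : 0 < p /\ per i j p by move: Hpd => /(is_periodP _ i1 jn).
have Hmin : forall q', 0 < q' -> q' < p -> ~ per i j q'.
  move=> q' q0 qp Hq; move/allP: Hall => /(_ q'); rewrite mem_iota.
  have -> : (1 <= q' < 1 + p.-1) = true by apply/andP; split; alia.
  move=> /(_ isT) /negP; apply; apply/(is_periodP _ i1 jn); split => //.
have lstop : 1 < i -> at_ i.-1 != at_ (i.-1 + p).
  move=> i2; apply/negP => /eqP E; move/negP: nl; apply; rewrite i2 /=.
  have i1' : 1 <= i.-1 by alia.
  rewrite /run_cond i1' jn /=; apply/and4P; split; first alia.
  - apply/(is_periodP _ i1' jn); split => // z z1 z2.
    case: (ltnP z i) => hz; first by have -> : z = i.-1 by alia.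
    exact: Hper.
  - apply/allP => q'; rewrite mem_iota => /andP[q1 q2]; apply/negP.
    move/(is_periodP _ i1' jn) => [q0 Hq]; apply: (Hmin q') => //; first alia.
    apply: (per_sub _ _ Hq); alia.
  - alia.
have rstop : j < n -> at_ j.+1 != at_ (j.+1 - p).
  move=> jn2; apply/negP => /eqP E; move/negP: nr; apply; rewrite jn2 /=.
  rewrite /run_cond i1 jn2 /=; apply/and4P; split; first alia.
  - apply/(is_periodP _ i1 jn2); split => // z z1 z2.
    case: (leqP (z + p) j) => hz; first exact: Hper.
    have -> : z = j.+1 - p by alia.
    by rewrite subnK //; alia.
  - apply/allP => q'; rewrite mem_iota => /andP[q1 q2]; apply/negP.
    move/(is_periodP _ i1 jn2) => [q0 Hq]; apply: (Hmin q') => //; first alia.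
    apply: (per_sub _ _ Hq); alia.
  - alia.
have Hend : j = n \/ (j < n /\ (at_ j.+1 < at_ (j.+1 - p))%O).
  case: (ltnP j n) => jn2; last by left; alia.
  right; split => //.
  have agr : forall t, t < j.+1 - (i + p) -> nth x0 (suf S (i + p)) t = nth x0 (suf S i) t.
    move=> t tm; rewrite !nth_suf; [|alia|alia].
    rewrite (Hper (i + t)); [congr at_|..]; alia.
  have ne' : nth x0 (suf S (i + p)) (j.+1 - (i + p)) != nth x0 (suf S i) (j.+1 - (i + p)).
    rewrite !nth_suf; [|alia|alia].
    have -> : i + p + (j.+1 - (i + p)) = j.+1 by alia.
    have -> : i + (j.+1 - (i + p)) = j.+1 - p by alia.
    by apply: rstop.
  have sq : j.+1 - (i + p) < size (suf S (i + p)) by rewrite size_suf; alia.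
  have sk : j.+1 - (i + p) < size (suf S i) by rewrite size_suf; alia.
  have := lex_mis_eq agr sq sk ne'.
  rewrite lx !nth_suf; [|alia|alia].
  have -> : i + p + (j.+1 - (i + p)) = j.+1 by alia.
  have -> : i + (j.+1 - (i + p)) = j.+1 - p by alia.
  by move <-.
pose f t := at_ (i + t %% p).
have fmod : forall x y, x %% p = y %% p -> f x = f y by move=> x y E; rewrite /f E.
have red : forall d, i + d <= j -> at_ (i + d) = f d.
  elim/ltn_ind => d IH hd.
  case: (ltnP d p) => dp; first by rewrite /f modn_small.
  have -> : at_ (i + d) = at_ (i + (d - p)).
    by rewrite (Hper (i + (d - p))); [congr at_|..]; alia.
  rewrite IH; [|alia|alia]; apply: fmod.
  by rewrite -{2}(subnK dp) modnDr.
pose rot r := mkseq (fun t => f (r + t)) p.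
have rotmod : forall r, rot (r %% p) = rot r.
  move=> r; apply: eq_mkseq => t; apply: fmod; by rewrite modnDml.
have [r0 r0p Hr0'] := min_exists rot p0.
have Hr0 : forall r, ~~ lex_lt (rot r) (rot r0).
  by move=> r; rewrite -rotmod; apply: Hr0'; rewrite ltn_mod.
have nthrot : forall r t, t < p -> nth x0 (rot r) t = f (r + t).
  by move=> r t tp; rewrite /rot nth_mkseq.
have prim : forall r, 0 < r < p -> rot (r0 + r) != rot r0.
  move=> r /andP[r1 rp]; apply/negP => /eqP E.
  have Ht : forall t, t < p -> f (r0 + r + t) = f (r0 + t).
    by move=> t tp; rewrite -!nthrot // E.
  have Hu : forall u, f (u + r) = f u.
    move=> u; set t := (u + (p - r0)) %% p.
    have tp : t < p by rewrite ltn_mod.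
    have e1 : f u = f (r0 + t).
      apply: fmod; rewrite modnDmr.
      have -> : r0 + (u + (p - r0)) = u + p by alia.
      by rewrite modnDr.
    have e2 : f (u + r) = f (r0 + r + t).
      apply: fmod; rewrite modnDmr.
      have -> : r0 + r + (u + (p - r0)) = (u + r) + p by alia.
      by rewrite modnDr.
    by rewrite e1 e2 Ht.
  apply: (Hmin r) => // z z1 z2.
  have -> : z = i + (z - i) by alia.
  rewrite red; last by alia.
  have -> : i + (z - i) + r = i + (z - i + r) by alia.
  by rewrite red ?Hu //; alia.
pose g t := f (r0 + t).
have gp : forall u, g (p + u) = g u.
  move=> u; apply: fmod; have -> : r0 + (p + u) = r0 + u + p by alia.
  by rewrite modnDr.
have lyn : forall r, 0 < r < p -> exists2 e, e < p - r &
    (forall t, t < e -> g (r + t) = g t) /\ (g e < g (r + e))%O.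
  move=> r /andP[r1 rp].
  have lt0 : lex_lt (rot r0) (rot (r0 + r)).
    have := lex_total (prim r ltac:(alia)).
    by rewrite (negbTE (Hr0 (r0 + r))) /=.
  have [m mp [Hag Hm]] := lex_eqsize x0 lt0 (ltac:(by rewrite /rot !size_mkseq)).
  rewrite size_mkseq in mp.
  rewrite !nthrot // -addnA in Hm.
  have Hag' : forall t, t < m -> g (r + t) = g t.
    move=> t tm; have := Hag t tm; rewrite !nthrot; [|alia|alia].
    by move=> E; rewrite /g addnA -E.
  case: (ltnP m (p - r)) => hm; first by exists m.
  exfalso; set s' := p - r; set u0 := m - s'.
  move/negP: (Hr0 (r0 + s')); apply.
  apply: (lex_mis (x0 := x0) (m := u0)).
  - move=> u uu; rewrite !nthrot; [|alia|alia].
    rewrite -addnA -/(g (s' + u)) -/(g u).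
    rewrite -Hag'; last by alia.
    have -> : r + (s' + u) = p + u by alia.
    by rewrite gp.
  - rewrite size_mkseq; alia.
  - rewrite size_mkseq; alia.
  - rewrite !nthrot; [|alia|alia].
    rewrite -addnA -/(g (s' + u0)) -/(g u0).
    have -> : s' + u0 = m by alia.
    by rewrite -(gp u0); have -> : p + u0 = r + m by alia.
set k := i + r0.
have ak : forall t, k + t <= j -> at_ (k + t) = g t.
  by move=> t hkt; rewrite /k -addnA red //; alia.
have kpn : k + p <= n by alia.
have Hnss : nss S k = k + p.
  apply: nss_eq; try alia.
  - apply: (lemG (e := j)) => //; try alia.
    apply: (per_sub _ _ Hper); alia.
  - move=> z /andP[kz zk].
    have [e' e'p [Hag Hlt]] := lyn (z - k) ltac:(alia).
    apply: lex_asym; apply: (lex_mis (x0 := x0) (m := e')).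
    + move=> t te; rewrite !nth_suf; [|alia|alia].
      rewrite ak; last by alia.
      have -> : z + t = k + (z - k + t) by alia.
      rewrite ak; last by alia.
      by rewrite Hag.
    + rewrite size_suf; alia.
    + rewrite size_suf; alia.
    + rewrite !nth_suf; [|alia|alia].
      rewrite ak; last by alia.
      have -> : z + e' = k + (z - k + e') by alia.
      by rewrite ak //; alia.
exists k; split => //; try alia.
split.
- rewrite /llce; apply: (lcp_eq (x0 := x0)).
  + move=> t tm; rewrite !nth_rtake; [|alia|alia|alia|alia].
    rewrite (Hper (k - t)); [congr at_|..]; alia.
  + rewrite size_rtake; alia.
  + rewrite size_rtake; alia.
  + case: (ltnP 1 i) => i2; last by left; rewrite size_rtake; alia.
    right; right; rewrite !nth_rtake; [|alia|alia|alia|alia].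
    have -> : k - (k.+1 - i) = i.-1 by alia.
    have -> : k + p - (k.+1 - i) = i.-1 + p by alia.
    by apply: lstop.
- rewrite /rlce; apply: (lcp_eq (x0 := x0)).
  + move=> t tm; rewrite !nth_suf; [|alia|alia].
    rewrite (Hper (k + t)); [congr at_|..]; alia.
  + rewrite size_suf; alia.
  + rewrite size_suf; alia.
  + case: (ltnP j n) => jn2; last by right; left; rewrite size_suf; alia.
    right; right; rewrite !nth_suf; [|alia|alia].
    have -> : k + (j.+1 - (k + p)) = j.+1 - p by alia.
    have -> : k + p + (j.+1 - (k + p)) = j.+1 by alia.
    by rewrite eq_sym; apply: rstop.
Qed.

Lemma L_pos k : 1 <= k <= n -> nss S k <= n ->
  nss S k - k < llce S k (nss S k) + rlce S k (nss S k) ->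
  llce S k (nss S k) <= nss S k - k -> 1 <= llce S k (nss S k).
Proof.
move=> /andP[k1 kn] qn pLR Lp.
have [kq _ _ _] := nss_spec (k:=k) (ltac:(alia)).
have [Lk Lagr Lstop] := llce_spec k1 kq qn.
have [Rb Ragr Rstop] := rlce_spec k1 kq qn.
case: (posnP (llce S k (nss S k))) => // L0; exfalso.
case: Lstop => [|ne]; first alia.
have R0 : rlce S k (nss S k) = 0.
  case: (posnP (rlce S k (nss S k))) => // R0; have := Ragr 0 R0; rewrite !addn0.
  by move: ne; rewrite L0 !subn0 => /eqP.
alia.
Qed.

End Str.

Definition prog : seq instr :=
 [:: ILoad 0 9; IConst 1 1; IAdd 2 0 1; IAdd 3 0 0; IConst 4 1;
     ILt 5 0 4; IJz 5 8; IHalt; ILoad 6 4; IEq 5 6 2;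
     IJz 5 12; IJmp 30; ISub 7 6 4; IAdd 5 0 4; ILoad 8 5;
     IAdd 5 3 4; ILoad 10 5; ILt 5 7 8; IJz 5 20; IJmp 30;
     IAdd 11 8 10; ILt 5 7 11; IJz 5 30; IAdd 12 4 1; ISub 12 12 8;
     IOut 12; IAdd 12 6 10; ISub 12 12 1; IOut 12; IOut 7;
     IAdd 4 4 1; IJmp 5].

Section Prog.
Context {disp : Order.disp_t} {T : orderType disp}.
Variable S : seq T.
Local Notation n := (size S).
Variable w : nat.
Hypothesis hw : 4 * n.+1 <= 2 ^ w.

Definition qk k := nss S k.
Definition Lk k := llce S k (qk k).
Definition Rk k := rlce S k (qk k).
Definition acc k := [&& qk k != n.+1, ~~ (qk k - k < Lk k) & qk k - k < Lk k + Rk k].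
Definition trip k := (k.+1 - Lk k, qk k + Rk k - 1, qk k - k).
Definition out_upto k :=
  flatten [seq [:: r.1.1; r.1.2; r.2] | r <- [seq trip x | x <- iota 1 k.-1 & acc x]].

Definition Inv c k := [/\ pc c = 5, [/\ regs c 0 = n, regs c 1 = 1, regs c 2 = n.+1,
  regs c 3 = n + n & regs c 4 = k], regs c 9 = 0, Defs.mem c = input_mem S &
  [/\ out c = out_upto k, maxaddr c <= 3 * n & 1 <= k <= n.+1]].

Lemma Wsmall v : v <= 3 * n + 3 -> v %% 2 ^ w = v.
Proof. move=> hv; rewrite modn_small //; alia. Qed.

Lemma im0 : input_mem S 0 = n. Proof. by []. Qed.
Lemma imk k : 1 <= k <= n -> input_mem S k = qk k.
Proof. move=> hk; rewrite /input_mem; case: eqP => [|_]; first alia. by case/andP: hk => _ ->. Qed.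
Lemma imL k : 1 <= k <= n -> qk k != n.+1 -> input_mem S (n + k) = Lk k.
Proof.
move=> hk hq; rewrite /input_mem; case: eqP => [|_]; first alia.
have -> : (n + k <= n) = false by apply/negbTE; rewrite -ltnNge; alia.
have -> : (n + k <= 2 * n) = true by apply/idP; alia.
by rewrite addKn -/(qk k) hq.
Qed.
Lemma imR k : 1 <= k <= n -> qk k != n.+1 -> input_mem S (n + n + k) = Rk k.
Proof.
move=> hk hq; rewrite /input_mem; case: eqP => [|_]; first alia.
have -> : (n + n + k <= n) = false by apply/negbTE; rewrite -ltnNge; alia.
have -> : (n + n + k <= 2 * n) = false by apply/negbTE; rewrite -ltnNge; alia.
have -> : (n + n + k <= 3 * n) = true by apply/idP; alia.
have -> : n + n + k - 2 * n = k by alia.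
by rewrite -/(qk k) hq.
Qed.

Lemma out_upto_S k : 1 <= k -> out_upto k.+1 =
  out_upto k ++ (if acc k then [:: (trip k).1.1; (trip k).1.2; (trip k).2] else [::]).
Proof.
move=> k1; rewrite /out_upto /=.
have -> : iota 1 k = iota 1 k.-1 ++ [:: k].
  have -> : iota 1 k = iota 1 (k.-1 + 1) by rewrite addn1 prednK.
  by rewrite iotaD /= add1n prednK.
rewrite filter_cat map_cat map_cat flatten_cat /=.
by case: (acc k) => /=; rewrite ?cats0.
Qed.

Lemma ex_elem (s : seq T) : 0 < size s -> exists x : T, True.
Proof. by case: s => // x. Qed.

Lemma exec_cons P slt c c' m : step P slt w c = Some c' ->
  exec P slt w m.+1 c = exec P slt w m c'.
Proof. by move=> /= ->. Qed.

Lemma exec0 P slt c : exec P slt w 0 c = c. Proof. by []. Qed.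

Lemma exec_halt P slt c m : step P slt w c = None -> exec P slt w m c = c.
Proof. by case: m => //= m ->. Qed.

Lemma exec_add P slt a b c :
  exec P slt w (a + b) c = exec P slt w b (exec P slt w a c).
Proof.
elim: a c => [|a IH] c; first by rewrite exec0.
rewrite addSn /=; case E: (step P slt w c) => [c'|]; first exact: IH.
by rewrite exec_halt.
Qed.

Arguments exec : simpl never.

Lemma iter c k : Inv c k -> k <= n -> exists2 m, m <= 24 & Inv (exec prog (sym_lt S) w m c) k.+1.
Proof.
case: c => pc0 R M O mx [/= -> [R0 R1 R2 R3 R4] R9 HM [HO Hmx Hk]] kn.
have M0 : M 0 = n by rewrite HM.
have Mk : M k = qk k by rewrite HM imk //; alia.
have nk : (n < k) = false by apply/negbTE; rewrite -leqNgt.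
case: (eqVneq (qk k) n.+1) => Hq.
- exists 8 => //.
  repeat (erewrite exec_cons; last (rewrite /step /=; reflexivity); rewrite /upd /= ?R0 ?R1 ?R2 ?R3 ?R4 ?R9 ?M0 ?Mk ?nk ?Hq ?eqxx /=).
  rewrite exec0 /Inv /=; split => //.
  + split => //. by rewrite Wsmall //; alia.
  + split.
    * rewrite HO out_upto_S; last alia.
      by rewrite /acc Hq eqxx /= cats0.
    * by rewrite geq_max Hmx /=; alia.
    * move: Hmx kn; clear; lia.
have [x0 _] := ex_elem (ltac:(alia) : 0 < size S).
have [kq qn1 _ _] := nss_spec (S:=S) (k:=k) (ltac:(alia)).
rewrite -/(qk k) in kq qn1.
have qn : qk k <= n by move: Hq qn1; rewrite neq_ltn; alia.
have [Lb _ _] := llce_spec x0 (ltac:(alia) : 1 <= k) kq qn.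
have [Rb _ _] := rlce_spec x0 (ltac:(alia) : 1 <= k) kq qn.
rewrite -/(Lk k) in Lb; rewrite -/(Rk k) in Rb.
have ML : M (n + k) = Lk k by rewrite HM imL //; alia.
have MR : M (n + n + k) = Rk k by rewrite HM imR //; alia.
have W1 : (n + k) %% 2 ^ w = n + k by rewrite Wsmall //; alia.
have W2 : (n + n + k) %% 2 ^ w = n + n + k by rewrite Wsmall //; alia.
have W3 : (k + 1) %% 2 ^ w = k + 1 by rewrite Wsmall //; alia.
have W4 : (Lk k + Rk k) %% 2 ^ w = Lk k + Rk k by rewrite Wsmall //; alia.
have W5 : (qk k + Rk k) %% 2 ^ w = qk k + Rk k by rewrite Wsmall //; alia.
have Hq' : (qk k == n.+1) = false by apply/negbTE.
case: (ltnP (qk k - k) (Lk k)) => HL.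
- exists 15 => //.
  repeat (erewrite exec_cons; last (rewrite /step /=; reflexivity); rewrite /upd /= ?R0 ?R1 ?R2 ?R3 ?R4 ?R9 ?M0 ?Mk ?nk ?Hq' ?eqxx ?W1 ?W2 ?W3 ?ML ?MR ?HL /=).
  rewrite exec0 /Inv /=; split => //.
  + split => //. by rewrite addn1.
  + split.
    * rewrite HO out_upto_S; last alia.
      by rewrite /acc Hq' HL /= cats0.
    * move: Hmx kn; clear; lia.
    * move: Hmx kn; clear; lia.
have HL' : (qk k - k < Lk k) = false by apply/negbTE; rewrite -leqNgt.
case: (ltnP (qk k - k) (Lk k + Rk k)) => HLR.
- exists 24 => //.
  repeat (erewrite exec_cons; last (rewrite /step /=; reflexivity); rewrite /upd /= ?R0 ?R1 ?R2 ?R3 ?R4 ?R9 ?M0 ?Mk ?nk ?Hq' ?eqxx ?W1 ?W2 ?W3 ?W4 ?W5 ?ML ?MR ?HL' ?HLR /=).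
  rewrite exec0 /Inv /=; split => //.
  + split => //. by rewrite addn1.
  + split.
    * rewrite HO out_upto_S; last alia.
      rewrite /acc Hq' HL' HLR /= /trip -!cats1 -!catA /=.
      by rewrite addn1.
    * move: Hmx kn; clear; lia.
    * move: Hmx kn; clear; lia.
have HLR' : (qk k - k < Lk k + Rk k) = false by apply/negbTE; rewrite -leqNgt.
exists 17 => //.
repeat (erewrite exec_cons; last (rewrite /step /=; reflexivity); rewrite /upd /= ?R0 ?R1 ?R2 ?R3 ?R4 ?R9 ?M0 ?Mk ?nk ?Hq' ?eqxx ?W1 ?W2 ?W3 ?W4 ?W5 ?ML ?MR ?HL' ?HLR' /=).
rewrite exec0 /Inv /=; split => //.
+ split => //. by rewrite addn1.
+ split.
  * rewrite HO out_upto_S; last alia.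
    by rewrite /acc Hq' HL' HLR' /= cats0.
  * move: Hmx kn; clear; lia.
  * move: Hmx kn; clear; lia.
Qed.

Lemma init_inv : Inv (exec prog (sym_lt S) w 5 (init_config S)) 1.
Proof.
have W1 : 1 %% 2 ^ w = 1 by rewrite Wsmall //; alia.
have W2 : (n + 1) %% 2 ^ w = n + 1 by rewrite Wsmall //; alia.
have W3 : (n + n) %% 2 ^ w = n + n by rewrite Wsmall //; alia.
rewrite /init_config.
repeat (erewrite exec_cons; last (rewrite /step /=; reflexivity); rewrite /upd /= ?W1 ?W2 ?W3 /=).
rewrite exec0 /Inv /=; split => //.
by split => //; rewrite addn1.
Qed.

Lemma loop d : forall c k, k + d = n.+1 -> Inv c k ->
  exists2 t, t <= 24 * d & Inv (exec prog (sym_lt S) w t c) n.+1.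
Proof.
elim: d => [|d IH] c k hkd Hinv.
  by exists 0 => //; rewrite exec0 -hkd addn0.
have [m hm Hm] := iter Hinv (ltac:(alia)).
have [t ht Ht] := IH _ _ (ltac:(alia) : k.+1 + d = n.+1) Hm.
exists (m + t); first alia.
by rewrite exec_add.
Qed.

Lemma fin_inv c : Inv c n.+1 ->
  let c' := exec prog (sym_lt S) w 2 c in
  [/\ halted prog (sym_lt S) w c', out c' = out c & maxaddr c' = maxaddr c].
Proof.
case: c => pc0 R M O mx [/= -> [R0 R1 R2 R3 R4] R9 HM [HO Hmx Hk]].
have nk : (n < n.+1) = true by apply/idP.
repeat (erewrite exec_cons; last (rewrite /step /=; reflexivity); rewrite /upd /= ?R0 ?R4 ?nk /=).
by rewrite exec0.
Qed.

End Prog.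

Section Correct.
Context {disp : Order.disp_t} {T : orderType disp}.
Variable S : seq T.
Local Notation n := (size S).

Lemma inj_aux x y : acc S x -> acc S y -> 1 <= x -> y <= n -> x < y ->
  trip S x = trip S y -> False.
Proof.
move=> ax ay x1 yn xy E.
have [x0 _] := ex_elem (ltac:(alia) : 0 < size S).
move: ax ay E; rewrite /acc /trip /Lk /Rk /qk.
move=> /and3P[qx Lx LRx] /and3P[qy Ly LRy] [E1 E2 E3].
rewrite -leqNgt in Lx; rewrite -leqNgt in Ly.
have [kqx qnx1 _ _] := nss_spec (S:=S) (k:=x) (ltac:(alia)).
have [kqy qny1 _ _] := nss_spec (S:=S) (k:=y) (ltac:(alia)).
have qnx : nss S x <= n by move: qx qnx1; rewrite neq_ltn; alia.
have qny : nss S y <= n by move: qy qny1; rewrite neq_ltn; alia.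
have [Lbx _ _] := llce_spec x0 (ltac:(alia) : 1 <= x) kqx qnx.
have [Lby _ _] := llce_spec x0 (ltac:(alia) : 1 <= y) kqy qny.
have L1 := L_pos x0 (ltac:(alia) : 1 <= x <= n) qnx LRx Lx.
apply: (nss_uniq (S := S) (p := nss S x - x) (ltac:(alia) : 1 <= x) xy); alia.
Qed.

Lemma out_correct : outputs_decreasing_runs S (out_upto S n.+1).
Proof.
exists [seq trip S x | x <- iota 1 n & acc S x]; split => //.
- rewrite map_inj_in_uniq ?filter_uniq ?iota_uniq // => x y.
  rewrite !mem_filter !mem_iota => /andP[ax hx] /andP[ay hy] E.
  case: (ltngtP x y) => // hxy; exfalso.
  + apply: (inj_aux ax ay _ _ hxy E); alia.
  + apply: (inj_aux ay ax _ _ hxy (esym E)); alia.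
- move=> i j p; apply/idP/idP.
  + case/mapP => x; rewrite mem_filter mem_iota => /andP[ax hx] E.
    have [x0 _] := ex_elem (ltac:(alia) : 0 < size S).
    move: ax; rewrite /acc /Lk /Rk /qk => /and3P[qx Lx LRx].
    have [_ qnx1 _ _] := nss_spec (S:=S) (k:=x) (ltac:(alia)).
    have qnx : nss S x <= n by move: qx qnx1; rewrite neq_ltn; alia.
    rewrite -leqNgt in Lx.
    move: E; rewrite /trip /Lk /Rk /qk => -[-> -> ->].
    apply: sound => //; alia.
  + move=> H.
    have [i1 ij jn len] : [/\ 1 <= i, i <= j, j <= n & 2 * p <= j - i + 1].
      by move: H => /andP[/and3P[/and5P[-> -> -> _ /andP[_ ->]] _ _] _].
    have [x0 _] := ex_elem (ltac:(alia) : 0 < size S).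
    have [k [hk1 hk2 hk3 hk4 [hL hR]]] := complete x0 H.
    apply/mapP; exists k.
    * rewrite mem_filter mem_iota; apply/andP; split; last alia.
      rewrite /acc /Lk /Rk /qk hk4 hL hR; apply/and3P; split.
      - apply/negP => /eqP; alia.
      - rewrite -leqNgt; alia.
      - alia.
    * rewrite /trip /Lk /Rk /qk hk4 hL hR; congr (_, _, _); alia.
Qed.

End Correct.

Theorem lemma9 :
  exists (P : seq instr) (c : nat),
    forall (disp : Order.disp_t) (T : orderType disp) (S : seq T) (w : nat),
      (4 * (size S).+1 <= 2 ^ w)%N ->
      exists t : nat,
        let fin := exec P (sym_lt S) w t (init_config S) in
        [/\ (t <= c * size S + c)%N,
            halted P (sym_lt S) w fin,
            (maxaddr fin <= c * size S + c)%N &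
            outputs_decreasing_runs S (out fin)].
Proof.
exists prog, 40 => disp T S w hw.
have Hi := init_inv hw.
have [t1 ht1 Hl] := loop hw (d := size S) (ltac:(alia) : 1 + size S = (size S).+1) Hi.
have [Hh Ho Hm] := fin_inv w Hl.
exists (5 + t1 + 2).
rewrite -exec_add -exec_add in Hh Ho Hm.
split => //.
- alia.
- rewrite Hm; move: Hl => [_ _ _ _ [_ ? _]]; alia.
- rewrite Ho; move: Hl => [_ _ _ _ [-> _ _]]; exact: out_correct.
Qed.
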